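(* Let $G=(V,E)$ be a directed graph, $s\neq t$ vertices, $k\ge 1$ an integer and $e(u,v)\in E$. Suppose that for all integers $0\le k_f,k_b\le k-1$ with $k_f+1+k_b\le k$, either (1) $EV^*_{k_f}(s,u)$ or $EV^*_{k_b}(v,t)$ does not exist, or (2) $EV^*_{k_f}(s,u)\cap EV^*_{k_b}(v,t)\neq\emptyset$. Then $e(u,v)$ is not an edge of $SPG_k(s,t)$.
   Context: A path from $x$ to $y$ in $G$ is a vertex sequence $x=v_0,\dots,v_l=y$ with $(v_{i-1},v_i)\in E$; its length is $l$ and $V(p)$, $E(p)$ are its vertex and edge sets. A simple path has no repeated vertex. $SPG_k(s,t)$ is the subgraph of $G$ formed by the union of vertex sets and edge sets of all simple paths from $s$ to $t$ of length at most $k$. For a vertex $u$ and integer $l\ge 0$, $EV^*_l(s,u)$ exists iff there is at least one simple path from $s$ to $u$ of length at most $l$ not containing $t$, and then $EV^*_l(s,u)$ is the intersection of $V(p)$ over all such paths. Symmetrically, $EV^*_l(v,t)$ exists iff there is at least one simple path from $v$ to $t$ of length at most $l$ not containing $s$, and then it is the intersection of $V(p)$ over all such paths. *)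

(* Defs.v *)
From mathcomp Require Import all_boot.
Set Implicit Arguments. Unset Strict Implicit. Unset Printing Implicit Defensive.

Section Paths.
Variables (V : finType) (E : rel V).

(* A path from x to y is a vertex sequence x = v_0 :: [v_1; ...; v_l] with
   (v_{i-1}, v_i) in E and v_l = y; represented by its head x and tail p.
   Its length is l = size p, its vertex set is x :: p. *)
Definition is_path (x y : V) (p : seq V) : bool :=
  path E x p && (last x p == y).

Definition path_len (p : seq V) : nat := size p.

Definition path_verts (x : V) (p : seq V) : seq V := x :: p.

Definition path_edges (x : V) (p : seq V) : seq (V * V) := zip (x :: p) p.

Definition simple_path (x y : V) (p : seq V) : bool :=
  is_path x y p && uniq (x :: p).

Definition edge_in_SPG (k : nat) (s t a b : V) : Prop :=
  exists p, [/\ simple_path s t p, path_len p <= k & (a, b) \in path_edges s p].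

Definition fwd_path (l : nat) (s t u : V) (p : seq V) : bool :=
  [&& simple_path s u p, path_len p <= l & t \notin path_verts s p].

Definition EVf_exists (l : nat) (s t u : V) : Prop := exists p, fwd_path l s t u p.

(* w is in EV*_l(s,u) (intersection of V(p) over all such paths) *)
Definition EVf_mem (l : nat) (s t u w : V) : Prop :=
  forall p, fwd_path l s t u p -> w \in path_verts s p.

Definition bwd_path (l : nat) (s t v : V) (p : seq V) : bool :=
  [&& simple_path v t p, path_len p <= l & s \notin path_verts v p].

Definition EVb_exists (l : nat) (s t v : V) : Prop := exists p, bwd_path l s t v p.

Definition EVb_mem (l : nat) (s t v w : V) : Prop :=
  forall p, bwd_path l s t v p -> w \in path_verts v p.

End Paths.

(* Main.v *)
Require Import Defs.
From mathcomp Require Import all_boot zify.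

Lemma zip_split (V : eqType) (u v : V) (p : seq V) : forall x,
  (u, v) \in zip (x :: p) p ->
  exists q1 q2, p = q1 ++ v :: q2 /\ last x q1 = u.
Proof.
elim: p => [|y p IH] x //=.
rewrite in_cons => /orP [/eqP [-> ->]|H].
  by exists [::], p.
have [q1 [q2 [-> <-]]] := IH y H.
by exists (y :: q1), q2.
Qed.

Theorem theorem3p4 (V : finType) (E : rel V) (s t : V) (k : nat) (u v : V) :
  s != t -> 1 <= k -> E u v ->
  (forall kf kb : nat, kf <= k - 1 -> kb <= k - 1 -> kf + 1 + kb <= k ->
     (~ EVf_exists E kf s t u \/ ~ EVb_exists E kb s t v) \/
     (exists w, EVf_mem E kf s t u w /\ EVb_mem E kb s t v w)) ->
  ~ edge_in_SPG E k s t u v.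
Proof.
move=> _ _ _ H [p [Hs Hk He]].
have [q1 [q2 [Ep Eu]]] := @zip_split _ u v p s He.
move: Hs; rewrite /simple_path /is_path Ep cat_path last_cat /= => /andP [/andP [/and3P [P1 Ev P2] /eqP Et]].
move=> HU; have : uniq ((s :: q1) ++ v :: q2) by []. rewrite cat_uniq => /and3P [U1 D U2].
have Dis : forall w, w \in s :: q1 -> w \in v :: q2 -> False.
  move=> w W1 W2; move/hasP: D; apply; by exists w.
have Hsz : size p = size q1 + 1 + size q2 by rewrite Ep size_cat /= addn1 addSn addnS.
move: Hk; rewrite /path_len Hsz => Hk.
have tin : t \in v :: q2 by rewrite -Et mem_last.
have F : fwd_path E (size q1) s t u q1.
  rewrite /fwd_path /simple_path /is_path P1 Eu eqxx U1 leqnn /path_verts /=.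
  by apply/negP => Ht; apply: (Dis t).
have B : bwd_path E (size q2) s t v q2.
  rewrite /bwd_path /simple_path /is_path P2 Et eqxx U2 leqnn /path_verts /=.
  by apply/negP => Hv; apply: (Dis s) => //; rewrite mem_head.
have Hk1 : size q1 <= k - 1 by move: Hk; clear; lia.
have Hk2 : size q2 <= k - 1 by move: Hk; clear; lia.
case: (H (size q1) (size q2) Hk1 Hk2 Hk) => [[Hn|Hn]|[w [W1 W2]]].
- by apply: Hn; exists q1.
- by apply: Hn; exists q2.
- exact: (Dis w (W1 _ F) (W2 _ B)).
Qed.
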